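(* Let $K_n$ be the complete directed graph on $[n]$ with edges $(i,j)$ for all $i<j$. A subgraph $H\subseteq K_n$ gives a face $Q_H$ of $\tilde Q_{K_n}$ if and only if there are integers $0=n_0<n_1<\dots<n_\ell<n_{\ell+1}=n$ ($\ell\ge0$) and, for each $k=0,\dots,\ell$, disjoint subsets $L_k,R_k\subseteq[n_k+1,n_{k+1}]$ such that $H=\bigsqcup_{k=0}^{\ell}(K_{[n_k+1,n_{k+1}]})_{L_k,R_k}$, i.e. $E(H)=\{(i,j):i<j,\ i\in L_k,\ j\in R_k\text{ for some }k\}$.
   Context: $[a,b]=\{a,\dots,b\}$; $K_P$ is the complete graph on $P$ with edges oriented from smaller to larger vertex. For a graph $G$ and disjoint vertex sets $L,R$, $G_{L,R}$ is the subgraph with edges $\{(i,j)\in E(G):i\in L,j\in R\}$. Subgraphs $H\subseteq K_n$ have vertex set $[n]$. $Q_H=\mathrm{conv}\{\mathbf e_i-\mathbf e_j:(i,j)\in E(H)\}$ and $\tilde Q_{K_n}=\mathrm{conv}(\{\mathbf 0\}\cup\{\mathbf e_i-\mathbf e_j:1\le i<j\le n\})$ in $\mathbb R^n$. *)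

(* Defs.v *)
(* Points of R^n are row vectors 'rV[R]_n over an arbitrary
   real field R (the paper uses R = the reals). Vertex v of [n] = {1..n}
   is represented by the ordinal v-1 : 'I_n. *)
From HB Require Import structures.
From mathcomp Require Import all_boot all_order all_algebra.
Set Implicit Arguments. Unset Strict Implicit. Unset Printing Implicit Defensive.
Import Order.TTheory GRing.Theory Num.Theory.
Local Open Scope ring_scope.

Definition evec (R : realFieldType) (n : nat) (i : 'I_n) : 'rV[R]_n :=
  \row_(k < n) (if k == i then 1 else 0).

Definition in_conv (R : realFieldType) (n : nat) (I : finType) (P : pred I)
  (f : I -> 'rV[R]_n) (x : 'rV[R]_n) : Prop :=
  exists w : I -> R,
    (forall i, 0 <= w i) /\ (forall i, ~~ P i -> w i = 0) /\
    \sum_i w i = 1 /\ x = \sum_i w i *: f i.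

Definition dotv (R : realFieldType) (n : nat) (c x : 'rV[R]_n) : R :=
  \sum_(k < n) c 0 k * x 0 k.

(* F is a face of P: F = P ∩ {c.x = b} for a valid inequality c.x <= b on P
   (this includes the empty face and P itself). *)
Definition is_face (R : realFieldType) (n : nat) (P F : 'rV[R]_n -> Prop) : Prop :=
  exists (c : 'rV[R]_n) (b : R),
    (forall x, P x -> dotv c x <= b) /\
    (forall x, F x <-> (P x /\ dotv c x = b)).

Definition Q_H (R : realFieldType) (n : nat) (E : {set 'I_n * 'I_n}) (x : 'rV[R]_n) : Prop :=
  in_conv (fun e : 'I_n * 'I_n => e \in E) (fun e => evec R e.1 - evec R e.2) x.

(* \tilde Q_{K_n} = conv({0} ∪ {e_i - e_j : i < j}) ; None stands for the point 0 *)
Definition Qtilde (R : realFieldType) (n : nat) (x : 'rV[R]_n) : Prop :=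
  in_conv (fun o : option ('I_n * 'I_n) =>
             if o is Some e then (e.1 < e.2)%N else true)
          (fun o => if o is Some e then evec R e.1 - evec R e.2 else 0) x.

Arguments Q_H : clear implicits.
Arguments Qtilde : clear implicits.

(* Main.v *)
Require Import Defs.
From HB Require Import structures.
From mathcomp Require Import all_boot all_order all_algebra ring lra zify.
Import Order.TTheory GRing.Theory Num.Theory.
Local Open Scope ring_scope.

Lemma sum_opt (R : nmodType) (T : finType) (F : option T -> R) :
  \sum_o F o = F None + \sum_e F (Some e).
Proof.
rewrite (bigD1 None) //=; congr (_ + _).
rewrite (reindex_omap Some id) /=; last by case.
by apply: eq_bigl => e; rewrite eqxx.
Qed.

Section Gen.
Variables (R : realFieldType) (n : nat).
Implicit Types (c x y : 'rV[R]_n).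

Lemma dotv_sum (I : finType) (w : I -> R) (f : I -> 'rV[R]_n) c :
  dotv c (\sum_i w i *: f i) = \sum_i w i * dotv c (f i).
Proof.
rewrite /dotv.
under eq_bigr => k _ do rewrite summxE mulr_sumr.
rewrite exchange_big /=; apply: eq_bigr => i _.
rewrite mulr_sumr; apply: eq_bigr => k _; rewrite mxE; ring.
Qed.

Lemma dotvB c x y : dotv c (x - y) = dotv c x - dotv c y.
Proof.
rewrite /dotv -sumrB; apply: eq_bigr => k _; rewrite !mxE; ring.
Qed.

Lemma dotv0 c : dotv c 0 = 0.
Proof. by rewrite /dotv big1 // => k _; rewrite mxE mulr0. Qed.

Lemma dotv_evec c (a : 'I_n) : dotv c (evec R a) = c 0 a.
Proof.
rewrite /dotv (bigD1 a) //= big1 ?addr0; first by rewrite mxE eqxx mulr1.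
by move=> k /negbTE kna; rewrite mxE kna mulr0.
Qed.

Lemma conv_le (I : finType) (P : pred I) (f : I -> 'rV[R]_n) c b x :
  (forall i, P i -> dotv c (f i) <= b) -> in_conv P f x -> dotv c x <= b.
Proof.
move=> H [w [w0 [wP [w1 ->]]]]; rewrite dotv_sum.
rewrite -[b]mul1r -w1 mulr_suml; apply: ler_sum => i _.
case: (boolP (P i)) => Pi; first by rewrite ler_wpM2l // H.
by rewrite wP // !mul0r.
Qed.

Lemma conv_ext (I : finType) (P Q : pred I) (f : I -> 'rV[R]_n) x :
  P =1 Q -> (in_conv P f x <-> in_conv Q f x).
Proof.
move=> PQ; split => -[w [w0 [wP [w1 ->]]]]; exists w; do ! split => //.
  by move=> i; rewrite -PQ; apply: wP.
by move=> i; rewrite PQ; apply: wP.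
Qed.

Lemma conv_face (I : finType) (P : pred I) (f : I -> 'rV[R]_n) c b x :
  (forall i, P i -> dotv c (f i) <= b) ->
  (in_conv P f x /\ dotv c x = b <->
   in_conv (fun i => P i && (dotv c (f i) == b)) f x).
Proof.
move=> H; split.
  move=> [[w [w0 [wP [w1 xE]]]] xb]; exists w; do ! split => //.
  have key : \sum_i w i * (b - dotv c (f i)) = 0.
    rewrite (eq_bigr (fun i => w i * b - w i * dotv c (f i))); last first.
      by move=> i _; rewrite mulrBr.
    by rewrite sumrB -mulr_suml w1 mul1r -dotv_sum -xE xb subrr.
  have tz : forall i, w i * (b - dotv c (f i)) = 0.
    move=> i; apply/eqP; move: i; apply/forallP.
    have := key; move/eqP; rewrite psumr_eq0; last first.
      move=> i _; case: (boolP (P i)) => Pi.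
        by rewrite mulr_ge0 // subr_ge0 H.
      by rewrite wP // mul0r.
    by move/allP => A; apply/forallP => i; apply: A; rewrite mem_index_enum.
  move=> i; rewrite negb_and => /orP [/wP //|ne].
  have := tz i; move/eqP; rewrite mulf_eq0 subr_eq0 => /orP [/eqP //|/eqP bE].
  by rewrite bE eqxx in ne.
move=> [w [w0 [wP [w1 xE]]]]; split.
  exists w; split => //; split => //.
  by move=> i Pi; apply: wP; rewrite (negbTE Pi).
rewrite xE dotv_sum -[b]mul1r -w1 mulr_suml; apply: eq_bigr => i _.
case: (boolP (P i && (dotv c (f i) == b))) => [/andP [_ /eqP ->]|Pi].
  by rewrite mulrC.
by rewrite wP // !mul0r.
Qed.

End Gen.

Section Spec.
Variables (R : realFieldType) (n : nat).

Lemma opt_conv (T : finType) (Q : pred T) (P : pred (option T))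
   (f : T -> 'rV[R]_n) x :
  P None = false -> (forall e, P (Some e) = Q e) ->
  (in_conv P (fun o => if o is Some e then f e else 0) x <-> in_conv Q f x).
Proof.
move=> PN PS; split.
  move=> [w [w0 [wP [w1 xE]]]]; exists (fun e => w (Some e)).
  have wN : w None = 0 by apply: wP; rewrite PN.
  do ! split => //.
  - by move=> e Qe; apply: wP; rewrite PS.
  - by rewrite -w1 sum_opt wN add0r.
  - by rewrite xE sum_opt wN scale0r add0r.
move=> [w [w0 [wP [w1 xE]]]].
exists (fun o => if o is Some e then w e else 0).
do ! split => //.
- by case.
- by case => [e|//]; rewrite PS; apply: wP.
- by rewrite sum_opt add0r.
- by rewrite xE sum_opt scale0r add0r.
Qed.

Lemma delta_conv (I : finType) (P : pred I) (f : I -> 'rV[R]_n) i0 x :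
  P i0 -> x = f i0 -> in_conv P f x.
Proof.
move=> Pi0 ->; exists (fun i => if i == i0 then 1 else 0); do ! split.
- by move=> i; case: (i == i0).
- by move=> i Pi; case: eqP => // ie; rewrite ie Pi0 in Pi.
- rewrite (bigD1 i0) //= eqxx big1 ?addr0 // => i /negbTE -> //.
- rewrite (bigD1 i0) //= eqxx scale1r big1 ?addr0 // => i /negbTE ->.
  by rewrite scale0r.
Qed.

Lemma Qt0 : Qtilde R n 0.
Proof. exact: (@delta_conv _ _ _ None). Qed.

Lemma Qt_vert (i j : 'I_n) : (i < j)%N -> Qtilde R n (evec R i - evec R j).
Proof. by move=> ij; apply: (@delta_conv _ _ _ (Some (i, j))). Qed.

Lemma QH_vert (E : {set 'I_n * 'I_n}) (i j : 'I_n) :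
  (i, j) \in E -> Q_H R n E (evec R i - evec R j).
Proof. by move=> ijE; apply: (@delta_conv _ _ _ (i, j)). Qed.

Definition ind (b : bool) : R := if b then 1 else 0.

Lemma ind4 (x1 x2 x3 x4 : bool) :
  (ind x1 - ind x2) - (ind x3 - ind x4) <= 2 /\
  ((ind x1 - ind x2) - (ind x3 - ind x4) = 2 -> x1 && x4).
Proof.
by case: x1; case: x2; case: x3; case: x4; rewrite /ind /=; split;
  try lra; move=> H; exfalso; lra.
Qed.

Lemma dot_ev (a b i j : 'I_n) :
  dotv (evec R i - evec R j) (evec R a - evec R b) =
  (ind (a == i) - ind (a == j)) - (ind (b == i) - ind (b == j)).
Proof. by rewrite dotvB !dotv_evec !mxE. Qed.

Lemma QH_vert_inv (E : {set 'I_n * 'I_n}) (i j : 'I_n) :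
  (i < j)%N -> Q_H R n E (evec R i - evec R j) -> (i, j) \in E.
Proof.
move=> ij H.
have Hle : forall e : 'I_n * 'I_n, e \in E ->
    dotv (evec R i - evec R j) (evec R e.1 - evec R e.2) <= 2.
  by move=> e _; rewrite dot_ev; case: (ind4 (e.1 == i) (e.1 == j) (e.2 == i) (e.2 == j)).
have := (@conv_face R n _ _ _ _ _ (evec R i - evec R j) Hle).1.
case.
  have nij : (i == j) = false by apply/eqP => e; rewrite e ltnn in ij.
  have nji : (j == i) = false by apply/eqP => e; rewrite e ltnn in ij.
  split => //; rewrite dot_ev !eqxx nij nji /ind /=; lra.
move=> w [w0 [wP [w1 _]]].
case: (boolP ((i, j) \in E)) => // ijE.
exfalso.
have : \sum_e w e = 0.
  apply: big1 => e _; apply: wP; apply/negP => /andP [eE /eqP de].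
  move: de; rewrite dot_ev => de.
  case: (ind4 (e.1 == i) (e.1 == j) (e.2 == i) (e.2 == j)) => _ /(_ de).
  move=> /andP [/eqP e1 /eqP e2].
  have ee : e = (i, j) by rewrite [e]surjective_pairing e1 e2.
  by rewrite -ee eE in ijE.
rewrite w1 => /eqP; rewrite oner_eq0.
by [].
Qed.

Lemma QH0 (E : {set 'I_n * 'I_n}) :
  (forall i j : 'I_n, (i, j) \in E -> (i < j)%N) -> ~ Q_H R n E 0.
Proof.
move=> hE H.
pose d : 'rV[R]_n := \row_k (k : nat)%:R.
have Hle : forall e : 'I_n * 'I_n, e \in E -> dotv d (evec R e.1 - evec R e.2) <= -1.
  move=> [a b] /hE ab; rewrite dotvB !dotv_evec !mxE /=.
  have : ((a : nat).+1 <= b)%N by [].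
  rewrite -(ler_nat R) -addn1 natrD => h; lra.
have := @conv_le R n _ _ _ _ _ _ Hle H; rewrite dotv0; lra.
Qed.

End Spec.

Section Comb.
Variables (R : realFieldType) (n : nat) (hn : (0 < n)%N)
  (E : {set 'I_n * 'I_n}) (c : 'I_n -> R) (b : R) (b0 : 0 < b).
Hypothesis Hle : forall i j : 'I_n, (i < j)%N -> c i - c j <= b.
Hypothesis HE : forall i j : 'I_n, (i, j) \in E <-> ((i < j)%N /\ c i - c j = b).

Definition tail (i : 'I_n) := [exists j, (i, j) \in E].
Definition head (j : 'I_n) := [exists i, (i, j) \in E].
Definition crossed (m : nat) :=
  [exists e : 'I_n * 'I_n, (e \in E) && (e.1 < m <= e.2)%N].

Lemma th (m : 'I_n) : tail m -> head m -> False.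
Proof.
case/existsP => d /HE [md cmd]; case/existsP => a /HE [am cam].
have := Hle _ _ (ltn_trans am md); move=> hh; have bb := b0; lra.
Qed.

Lemma chain (i j : 'I_n) : tail i -> head j -> (i < j)%N ->
  (forall m, (i < m <= j)%N -> crossed m) -> c j + b <= c i.
Proof.
move=> ti hj ij cr.
have case1 : forall q : 'I_n, (j <= q)%N -> c q + b <= c i -> c j + b <= c i.
  move=> q jq cq; case/existsP: hj => p /HE [pj cp].
  have := Hle _ _ (leq_trans pj jq); lra.
have main : forall d (q : 'I_n), (j - q <= d)%N -> head q -> (i < q)%N ->
    c q + b <= c i -> c j + b <= c i.
  elim => [|d IH] q dq hq iq cq.
    by apply: (case1 q) => //; lia.
  case: (leqP j q) => [jq|qj]; first exact: (case1 q).
  have : crossed q.+1 by apply: cr; lia.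
  case/existsP => e /andP [eE /andP [e1 e2]].
  have e1q : (e.1 < q)%N.
    rewrite ltn_neqAle -ltnS e1 andbT; apply/eqP => eq.
    apply: (th q) => //; rewrite /tail; apply/existsP; exists e.2.
    have -> : q = e.1 by apply: val_inj; rewrite /= eq.
    by rewrite -surjective_pairing.
  have eE' : (e.1, e.2) \in E by rewrite -surjective_pairing.
  have [_ ce] := (HE e.1 e.2).1 eE'.
  have := Hle _ _ e1q => h1.
  apply: (IH e.2); first by move: dq e2 qj; move: (nat_of_ord e.2) => x; lia.
  - by apply/existsP; exists e.1; rewrite -surjective_pairing.
  - by move: iq e2; move: (nat_of_ord e.2) => x; lia.
  - lra.
case/existsP: ti => j1 /HE [ij1 c1].
apply: (main (j - j1)%N j1) => //.
- by apply/existsP; exists i; apply/HE.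
- lra.
Qed.

Lemma comb_fwd : exists (l : nat) (s : nat -> nat) (L Rs : nat -> {set 'I_n}),
    [/\ s 0%N = 0%N /\ s l.+1 = n,
        (forall k, (k <= l)%N -> (s k < s k.+1)%N),
        (forall k, (k <= l)%N -> forall i : 'I_n,
            (i \in L k) || (i \in Rs k) -> (s k <= i < s k.+1)%N),
        (forall k, (k <= l)%N -> [disjoint L k & Rs k]) &
        (forall i j : 'I_n, (i, j) \in E <->
            ((i < j)%N /\ exists k, (k <= l)%N /\ i \in L k /\ j \in Rs k))].
Proof.
have ncr0 : ~~ crossed 0.
  by apply/existsP => -[e /andP [_ /andP [] ]].
have ncrn : ~~ crossed n.
  apply/existsP => -[e /andP [_ /andP [_ h]]].
  by have := ltn_ord e.2; rewrite ltnNge h.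
pose S := [seq m <- iota 0 n.+1 | ~~ crossed m].
have memS : forall m, (m \in S) = (m <= n)%N && ~~ crossed m.
  by move=> m; rewrite mem_filter mem_iota add0n ltnS andbC.
have S0 : S = 0%N :: [seq m <- iota 1 n | ~~ crossed m] by rewrite /S /= ncr0.
have Slast : last 0%N S = n.
  by rewrite /S -addn1 iotaD cats1 filter_rcons add0n ncrn last_rcons.
have nS : (n \in S) by rewrite memS leqnn.
have szS : (2 <= size S)%N.
  move: nS; rewrite S0 inE (gtn_eqF hn) /=.
  by case: [seq m <- iota 1 n | ~~ crossed m].
have sS : sorted ltn S by apply: sorted_filter; [exact: ltn_trans|exact: iota_ltn_sorted].
pose s k := nth 0%N S k.
have smono : forall a c, (a < size S)%N -> (c < size S)%N -> (a < c)%N -> (s a < s c)%N.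
  by move=> a c' aS cS ac; apply: (sorted_ltn_nth ltn_trans 0%N sS).
have sinv : forall a c, (a < size S)%N -> (c < size S)%N -> (s a < s c)%N -> (a < c)%N.
  move=> a c' aS cS sac; case: (ltnP a c') => // ca.
  move: ca; rewrite leq_eqVlt => /orP [/eqP e|ca].
    by rewrite e ltnn in sac.
  by have := smono _ _ cS aS ca; lia.
have sinS : forall k, (k < size S)%N -> s k \in S by move=> k kS; apply: mem_nth.
pose l := (size S).-2.
have lS : l.+2 = size S by rewrite /l; lia.
pose L k := [set i : 'I_n | tail i && (s k <= i < s k.+1)%N].
pose Rs k := [set i : 'I_n | head i && (s k <= i < s k.+1)%N].
exists l, s, L, Rs; split.
- split; first by rewrite /s S0.
  have -> : l.+1 = (size S).-1 by lia.
  by rewrite /s nth_last Slast.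
- by move=> k kl; apply: smono; lia.
- by move=> k _ i; rewrite !inE => /orP [/andP [_ ->]|/andP [_ ->]].
- move=> k _; rewrite disjoint_subset; apply/subsetP => i.
  rewrite !inE => /andP [ti _]; apply/negP => /andP [hi _].
  exact: th ti hi.
move=> i j; split.
  move=> ijE; have ij : (i < j)%N by have [] := (HE i j).1 ijE.
  split => //.
  pose f := find (fun m => i < m)%N S.
  have hasS : has (fun m => i < m)%N S by apply/hasP; exists n.
  have fS : (f < size S)%N by rewrite /f -has_find.
  have isf : (i < s f)%N by apply: nth_find.
  have f0 : f != 0%N by apply/eqP => f0; rewrite f0 /s S0 in isf.
  have skf : (s f.-1 <= i)%N.
    have fl : (f.-1 < f)%N by lia.
    have := before_find 0%N fl; rewrite /s => h.
    by rewrite leqNgt h.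
  have jsf : (j < s f)%N.
    rewrite ltnNge; apply/negP => sfj.
    have : s f \in S by apply: sinS.
    rewrite memS => /andP [_ /negP]; apply; apply/existsP; exists (i, j).
    by rewrite ijE /= isf sfj.
  exists f.-1; split; first by lia.
  have ef : f.-1.+1 = f by lia.
  split; rewrite inE ef.
    rewrite skf isf /tail !andbT. apply: (introT existsP). exists j. done.
  rewrite jsf (leq_trans skf (ltnW ij)) /head !andbT.
  by apply/existsP; exists i.
move=> [ij [k [kl [iL jR]]]].
move: iL jR; rewrite !inE => /andP [ti /andP [ski isk]] /andP [hj /andP [skj jsk]].
apply/HE; split => //.
have cr : forall m, (i < m <= j)%N -> crossed m.
  move=> m /andP [im mj]; case: (boolP (crossed m)) => // ncm; exfalso.
  have mS : m \in S by rewrite memS ncm andbT; have := ltn_ord j; lia.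
  have idxS : (index m S < size S)%N by rewrite index_mem.
  have smi : s (index m S) = m by rewrite /s nth_index.
  have h1 : (k < index m S)%N by apply: sinv => //; [lia | rewrite smi; lia].
  have h2 : (index m S < k.+1)%N by apply: sinv => //; [lia | rewrite smi; lia].
  lia.
have h1 := Hle _ _ ij; have h2 := @chain i j ti hj ij cr.
apply/eqP; rewrite eq_le; apply/andP; split; lra.
Qed.

End Comb.

Lemma sum_lt (m k : nat) : (\sum_(k' < m) (k' < k)%N)%N = minn k m.
Proof.
elim: m => [|m IH]; first by rewrite big_ord0 minn0.
rewrite big_ord_recr /= IH; case: (ltnP m k) => h /=; lia.
Qed.

Theorem mainTheorem18 (R : realFieldType) (n : nat) (hn : (0 < n)%N)
  (E : {set 'I_n * 'I_n})
  (hE : forall i j : 'I_n, (i, j) \in E -> (i < j)%N) :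
  is_face (Qtilde R n) (Q_H R n E) <->
  exists (l : nat) (s : nat -> nat) (L Rs : nat -> {set 'I_n}),
    [/\ s 0%N = 0%N /\ s l.+1 = n,
        (forall k, (k <= l)%N -> (s k < s k.+1)%N),
        (forall k, (k <= l)%N -> forall i : 'I_n,
            (i \in L k) || (i \in Rs k) -> (s k <= i < s k.+1)%N),
        (forall k, (k <= l)%N -> [disjoint L k & Rs k]) &
        (forall i j : 'I_n, (i, j) \in E <->
            ((i < j)%N /\ exists k, (k <= l)%N /\ i \in L k /\ j \in Rs k))].
Proof.
split.
  move=> [c [b [valid face]]].
  pose c' := fun i : 'I_n => c 0 i.
  have Hle : forall i j : 'I_n, (i < j)%N -> c' i - c' j <= b.
    move=> i j ij; have := valid _ (@Qt_vert R n i j ij).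
    by rewrite dotvB !dotv_evec.
  have b0 : 0 < b.
    have := valid _ (Qt0 R n); rewrite dotv0 le_eqVlt => /orP [/eqP bz|//].
    exfalso; apply: (@QH0 R n E hE); apply/face; split; [exact: Qt0|by rewrite dotv0].
  have HE : forall i j : 'I_n, (i, j) \in E <-> ((i < j)%N /\ c' i - c' j = b).
    move=> i j; split.
      move=> ijE; split; first exact: hE.
      have [_] := (face _).1 (@QH_vert R n E i j ijE).
      by rewrite dotvB !dotv_evec.
    move=> [ij cij]; apply: (@QH_vert_inv R n E i j ij); apply/face; split.
      exact: (@Qt_vert R n i j ij).
    by rewrite dotvB !dotv_evec.
  exact: (@comb_fwd R n hn E c' b b0 Hle HE).
move=> [l [s [L [Rs [[s0 sl] sinc sblk sdis sE]]]]].
have sle : forall k1 k2, (k1 <= k2 <= l.+1)%N -> (s k1 <= s k2)%N.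
  move=> k1 k2; elim: k2 => [|k2 IH]; first by rewrite leqn0 => /andP [/eqP -> _].
  move=> /andP; rewrite leq_eqVlt ltnS => -[/orP [/eqP -> //| h1] h2].
  have := IH (introT andP (conj h1 (ltnW h2))); have := sinc k2 h2; lia.
pose N (i : 'I_n) := (\sum_(k < l.+1) (s k.+1 <= i)%N)%N.
have blockN : forall k (i : 'I_n), (k <= l)%N -> (s k <= i < s k.+1)%N -> N i = k.
  move=> k i kl /andP [ski isk].
  rewrite /N (eq_bigr (fun k' : 'I_l.+1 => nat_of_bool (k' < k)%N)).
    by rewrite sum_lt; lia.
  move=> k' _; congr nat_of_bool.
  case: (ltnP k' k) => h.
    by apply: (leq_trans _ ski); apply: sle; rewrite h /=; lia.
  apply/negbTE; rewrite -ltnNge; apply: (leq_trans isk); apply: sle.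
  by rewrite ltnS h /=; have := ltn_ord k'; lia.
pose inL (i : 'I_n) := [exists k : 'I_l.+1, i \in L k].
pose inR (i : 'I_n) := [exists k : 'I_l.+1, i \in Rs k].
have LN : forall k (i : 'I_n), (k <= l)%N -> i \in L k -> N i = k.
  by move=> k i kl iL; apply: blockN => //; apply: sblk; rewrite ?iL.
have RN : forall k (i : 'I_n), (k <= l)%N -> i \in Rs k -> N i = k.
  by move=> k i kl iR; apply: blockN => //; apply: sblk; rewrite ?iR ?orbT.
pose c : 'rV[R]_n := \row_i (3 * (N i)%:R + (ind R (inL i) - ind R (inR i))).
have key : forall i j : 'I_n, (i < j)%N ->
    c 0 i - c 0 j <= 2 /\
    (c 0 i - c 0 j = 2 <-> exists k, (k <= l)%N /\ i \in L k /\ j \in Rs k).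
  move=> i j ij; rewrite !mxE.
  have Nij : (N i <= N j)%N.
    apply: leq_sum => k _; case: (leqP (s k.+1) i) => h //=.
    by rewrite (leq_trans h (ltnW ij)).
  have [i4a i4b] := ind4 R (inL i) (inR i) (inL j) (inR j).
  have ib : forall x, 0 <= ind R x <= 1 by case; rewrite /ind /=; lra.
  move: Nij; rewrite leq_eqVlt => /orP [/eqP NN|Nlt].
    rewrite NN; split; first lra.
    split.
      move=> h; have /andP [/existsP [k1 iL] /existsP [k2 jR]] : inL i && inR j.
        by apply: i4b; lra.
      exists k1; split; first by have := ltn_ord k1.
      split => //; have := LN _ _ (ltn_ord k1) iL; have := RN _ _ (ltn_ord k2) jR.
      rewrite NN => e2 e1.
      by have -> : k1 = k2 by apply: val_inj; rewrite /= -e1 -e2.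
    move=> [k [kl [iL jR]]].
    have hLi : inL i by apply/existsP; exists (Ordinal (kl : (k < l.+1)%N)).
    have hRj : inR j by apply/existsP; exists (Ordinal (kl : (k < l.+1)%N)).
    have hRi : inR i = false.
      apply/negbTE/negP => /existsP [k' iR].
      have : k = k' by rewrite -(LN _ _ kl iL) (RN _ _ (ltn_ord k') iR).
      move=> kk; move: (sdis _ kl); rewrite disjoint_subset => /subsetP /(_ i iL).
      by rewrite inE kk iR.
    have hLj : inL j = false.
      apply/negbTE/negP => /existsP [k' jL].
      have : k = k' by rewrite -(RN _ _ kl jR) (LN _ _ (ltn_ord k') jL).
      move=> kk; move: (sdis _ kl); rewrite disjoint_subset => /subsetP /(_ j).
      by rewrite kk jL => /(_ isT); rewrite inE -kk jR.
    rewrite hLi hRj hRi hLj /ind /=; lra.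
  have NltR : (N i)%:R + 1 <= (N j)%:R :> R by rewrite natr1 ler_nat.
  have := ib (inL i); have := ib (inR i); have := ib (inL j); have := ib (inR j).
  move=> /andP [? ?] /andP [? ?] /andP [? ?] /andP [? ?].
  split; first lra.
  split.
    move=> h; have : (2:R) < 2 by lra.
    by rewrite ltxx.
  move=> [k [kl [iL jR]]]; exfalso.
  by move: Nlt; rewrite (LN _ _ kl iL) (RN _ _ kl jR) ltnn.
exists c, 2.
pose P := fun o : option ('I_n * 'I_n) => if o is Some e then (e.1 < e.2)%N else true.
pose f := fun o : option ('I_n * 'I_n) =>
  if o is Some e then evec R e.1 - evec R e.2 else 0.
have val : forall o, P o -> dotv c (f o) <= 2.
  case => [[i j] /= ij|_]; last by rewrite /f dotv0; lra.
  by rewrite /f dotvB !dotv_evec; case: (key i j ij).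
split.
  by move=> x; apply: (@conv_le R n _ P f).
move=> x.
rewrite (@conv_face R n _ P f c 2 x val).
rewrite /Q_H.
symmetry; apply: opt_conv.
  by rewrite /P /f dotv0 /= eq_sym pnatr_eq0.
move=> [i j] /=; rewrite /f dotvB !dotv_evec.
case: (ltnP i j) => ij /=.
  have [_ k2] := key i j ij.
  apply/idP/idP.
    by move/eqP/k2 => h; apply/sE; split.
  by move/sE => [_ /k2 ->].
symmetry; apply/negbTE/negP => /hE; by rewrite ltnNge ij.
Qed.
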